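(* Let $D$ be a directed acyclic graph with $n$ nodes and exactly one source. Then the burning number of $D$ is at most $\left\lceil \sqrt{2n+\tfrac14}-\tfrac12\right\rceil$.
   Context: Burning process on a digraph $D$: a sequence $(x_1,\ldots,x_b)$ of nodes is a burning sequence for $D$ if after $b$ steps of the following process every node of $D$ is burned; the $i$-th step consists of first burning all out-neighbours of all currently burned nodes, and then burning the node $x_i$. The burning number of $D$ is the length of a shortest burning sequence. Equivalently, with $N^+_k(v)$ the set of nodes reachable from $v$ by a directed path with at most $k$ arcs, the burning number is the least $b$ such that there are nodes $v_1,\ldots,v_b$ with $V(D)=\bigcup_{i=1}^b N^+_{i-1}(v_i)$. *)

(* Defs.v *)
From HB Require Import structures.
From mathcomp Require Import all_boot all_order all_algebra.
From mathcomp Require Import reals.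
Set Implicit Arguments. Unset Strict Implicit. Unset Printing Implicit Defensive.

(* A digraph is a finite type of nodes T with an arc relation e : rel T
   (e u v means there is an arc u -> v). *)

Fixpoint out_ball (T : finType) (e : rel T) (k : nat) (v : T) : {set T} :=
  match k with
  | 0 => [set v]
  | k'.+1 => out_ball e k' v :|:
             \bigcup_(u in out_ball e k' v) [set w | e u w]
  end.

(* (v_1,...,v_b) (stored 0-indexed in the tuple s, v_{i+1} = tnth s i)
   is a burning sequence iff V = U_{i=1..b} N^+_{i-1}(v_i). *)
Definition burning_seq (T : finType) (e : rel T) (b : nat) (s : b.-tuple T) : bool :=
  [forall x : T, [exists i : 'I_b, x \in out_ball e i (tnth s i)]].

Definition has_burning_seq (T : finType) (e : rel T) (b : nat) : bool :=
  [exists s : b.-tuple T, burning_seq e s].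

Lemma has_burning_seq_exists (T : finType) (e : rel T) :
  exists b, has_burning_seq e b.
Proof.
exists (size (enum T)); apply/existsP; exists (in_tuple (enum T)).
apply/forallP => x; apply/existsP.
have Hx : index x (enum T) < size (enum T) by rewrite index_mem mem_enum.
exists (Ordinal Hx); rewrite (tnth_nth x) /= nth_index ?mem_enum //.
by elim: (index _ _) => [|k IH] /=; rewrite ?in_set1 // in_setU IH.
Qed.

Definition burning_number (T : finType) (e : rel T) : nat :=
  ex_minn (has_burning_seq_exists e).

Definition acyclic (T : finType) (e : rel T) : Prop :=
  forall (x : T) (p : seq T), path e x p -> last x p = x -> p = [::].

Definition is_source (T : finType) (e : rel T) (s : T) : Prop :=
  forall u : T, ~~ e u s.

(* Main.v *)
Require Import Defs.
From HB Require Import structures.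
From mathcomp Require Import all_boot all_order all_algebra.
From mathcomp Require Import reals.
From mathcomp Require Import zify ring lra.
Import Order.TTheory GRing.Theory Num.Theory.
Set Implicit Arguments. Unset Strict Implicit. Unset Printing Implicit Defensive.

Lemma acyc_uniq (T : finType) (e : rel T) : acyclic e ->
  forall x p, path e x p -> uniq (x :: p).
Proof.
move=> Hac x p; elim: p x => [|y p IH] x //= /andP [exy pp].
have /= -> := IH y pp; rewrite andbT.
apply/negP => xin.
have : path e x (y :: p) by rewrite /= exy.
move: xin; set q := y :: p => xin.
have qn : q != [::] by [].
move: qn; case/splitPr: xin => p1 p2 _.
rewrite -cat_rcons cat_path => /andP [H _].
have := Hac _ _ H; rewrite last_rcons => /(_ erefl).
by case: p1 {H}.
Qed.

Lemma walk_lt (T : finType) (e : rel T) : acyclic e ->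
  forall x p, path e x p -> size p < #|T|.
Proof.
move=> Hac x p pp; have U := acyc_uniq Hac pp.
have := max_card (mem (x :: p)).
by rewrite (card_uniqP U).
Qed.

Lemma ball_path (T : finType) (e : rel T) v k :
  forall q, path e v q -> size q <= k -> last v q \in out_ball e k v.
Proof.
elim: k => [|k IH] q.
  by case: q => //= _ _; rewrite in_set1.
move=> pq sq; rewrite /= in_setU.
case: (leqP (size q) k) => h; first by rewrite IH.
apply/orP; right.
move: pq sq h; case/lastP: q => [|q y] //.
rewrite rcons_path size_rcons last_rcons => /andP [pq ey] sq h.
apply/bigcupP; exists (last v q); first by apply: IH => //; lia.
by rewrite inE.
Qed.

Definition eS (T : finType) (e : rel T) (S : {set T}) : rel T :=
  [rel x y | e x y && (y \in S)].

Lemma eS_sub (T : finType) (e : rel T) S : subrel (eS e S) e.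
Proof. by move=> x y; rewrite /eS /= => /andP [].  Qed.

Lemma eS_acyc (T : finType) (e : rel T) S : acyclic e -> acyclic (eS e S).
Proof. by move=> Hac x p pp; apply: Hac; apply: sub_path pp; apply: eS_sub. Qed.

Lemma eS_all (T : finType) (e : rel T) S x q :
  path (eS e S) x q -> forall y, y \in q -> y \in S.
Proof.
elim: q x => [|z q IH] x //= /andP [/andP [_ zS] pq] y.
rewrite inE => /orP [/eqP -> // | yq]; exact: IH pq y yq.
Qed.

Lemma eS_restrict (T : finType) (e : rel T) (S B : {set T}) x q :
  path (eS e S) x q -> (forall y, y \in q -> y \in B) -> path (eS e B) x q.
Proof.
elim: q x => [|z q IH] x //= /andP [/andP [exz _] pq] H.
apply/andP; split; first by rewrite /eS /= exz H ?inE ?eqxx.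
by apply: IH => // y yq; apply: H; rewrite inE yq orbT.
Qed.

Lemma path_conn_last (T : finType) (r : rel T) x q y :
  path r x q -> y \in q -> connect r y (last x q).
Proof.
move=> pq yq; move: pq; case/splitPr: yq => q1 q2.
rewrite cat_path last_cat /= => /andP [_ /andP [_ p2]].
by apply/connectP; exists q2.
Qed.

Definition has_walk (T : finType) (r : rel T) v k : bool :=
  [exists p : k.-tuple T, path r v p].

Lemma has_walkI (T : finType) (r : rel T) v (p : seq T) :
  path r v p -> has_walk r v (size p).
Proof. by move=> pp; apply/existsP; exists (in_tuple p). Qed.

Lemma has_walkE (T : finType) (r : rel T) v k :
  has_walk r v k -> exists2 p : seq T, size p = k & path r v p.
Proof. by case/existsP => p pp; exists (tval p); rewrite ?size_tuple. Qed.

Lemma last_in (T : eqType) (x : T) q : q != [::] -> last x q \in q.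
Proof. by case: q => // y q _; rewrite /=; apply: mem_last. Qed.

Lemma claim (T : finType) (e : rel T) (Hac : acyclic e) (s : T) b :
  forall S : {set T}, (forall x, x \in S -> connect (eS e S) s x) ->
  #|S| * 2 <= b * b.+1 ->
  exists t : b.-tuple T, forall x, x \in S ->
    exists i : 'I_b, x \in out_ball e i (tnth t i).
Proof.
elim: b => [|b IH] S HS Hc.
  exists [tuple] => x xS; have : 0 < #|S| by apply/card_gt0P; exists x.
  lia.
set E := eS e S.
have acE : acyclic E by apply: eS_acyc.
case: (boolP (has_walk E s b.+1)) => hw; last first.
  exists (mktuple (fun _ => s)) => x /HS /connectP [q pq ->].
  exists ord_max; rewrite tnth_mktuple /=.
  apply: ball_path; first by apply: sub_path pq; apply: eS_sub.
  rewrite leqNgt; apply/negP => sq.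
  move: hw; have := has_walkI (take_path b.+1 pq).
  by rewrite size_takel // => ->.
have exP : exists k, has_walk E s k by exists b.+1.
have ubP : forall k, has_walk E s k -> k <= #|T|.
  by move=> k /has_walkE [p <- pp]; apply: ltnW; apply: walk_lt pp.
case: (ex_maxnP exP ubP) => L HL maxL.
have bL := maxL _ hw.
have [p sp pp] := has_walkE HL.
set p1 := take (L - b) p; set p2 := drop (L - b) p.
set v := last s p1.
have sp1 : size p1 = L - b by rewrite size_take; case: ltnP; lia.
have sp2 : size p2 = b by rewrite size_drop; lia.
move: pp; rewrite -(cat_take_drop (L - b) p) -/p1 -/p2 cat_path -/v.
move=> /andP [pp1 pp2].
have nolong : forall r, path E v r -> size r <= b.
  move=> r pr; rewrite leqNgt; apply/negP => sr.
  have : path E s (p1 ++ take b.+1 r) by rewrite cat_path pp1 take_path.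
  move/has_walkI/maxL; rewrite size_cat size_takel //; lia.
set R := [set x in S | connect E v x].
set S' := S :\: R.
have HS' : forall x, x \in S' -> connect (eS e S') s x.
  move=> x; rewrite !inE => /andP [xR xS].
  have /connectP [q pq xq] := HS x xS.
  apply/connectP; exists q; last by [].
  apply: (eS_restrict pq) => y yq.
  rewrite !inE (eS_all pq yq) andbT; apply/negP => /andP [_ cy].
  move: xR; rewrite xS /= (connect_trans cy) //.
  by rewrite xq; apply: path_conn_last.
have vS : v \in S.
  apply: (eS_all pp1); apply: last_in.
  by rewrite -size_eq0 sp1; lia.
have cR : b.+1 <= #|S :&: R|.
  have U := acyc_uniq acE pp2.
  have -> : b.+1 = #|v :: p2| by rewrite (card_uniqP U) /= sp2.
  apply: subset_leq_card; apply/subsetP => y yin.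
  have cy := path_connect pp2 yin.
  rewrite !inE cy andbT.
  move: yin; rewrite inE andbb => /orP [/eqP -> // | yq]; exact: eS_all pp2 y yq.
have Hc' : #|S'| * 2 <= b * b.+1.
  have := cardsID R S; rewrite -/S'; nia.
have [t' Ht'] := IH S' HS' Hc'.
exists (mktuple (fun i : 'I_b.+1 => nth s (rcons t' v) i)) => x xS.
case: (boolP (x \in R)) => xR.
  exists ord_max; rewrite tnth_mktuple /= nth_rcons size_tuple ltnn eqxx.
  move: xR; rewrite inE xS /= => /connectP [q pq ->].
  apply: ball_path; first by apply: sub_path pq; apply: eS_sub.
  exact: nolong.
have [i Hi] : exists i : 'I_b, x \in out_ball e i (tnth t' i).
  by apply: Ht'; rewrite inE xR xS.
exists (widen_ord (leqnSn b) i); rewrite tnth_mktuple /= nth_rcons size_tuple ltn_ord.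
by rewrite -tnth_nth.
Qed.

Lemma reach_all (T : finType) (e : rel T) (Hac : acyclic e) (s : T)
  (Hs : forall t : T, is_source e t -> t = s) :
  forall x, connect (eS e setT) s x.
Proof.
move=> x.
pose P k := [exists y : T, [exists p : k.-tuple T, path e y p && (last y p == x)]].
have exP : exists k, P k.
  exists 0; rewrite /P; apply/existsP; exists x; apply/existsP.
  by exists (in_tuple [::]) => /=; rewrite eqxx.
have ubP : forall k, P k -> k <= #|T|.
  move=> k; rewrite /P => /existsP [y /existsP [p /andP [pp _]]].
  by apply: ltnW; rewrite -(size_tuple p); apply: walk_lt pp.
case: (ex_maxnP exP ubP) => L; rewrite /P => /existsP [y /existsP [p /andP [pp /eqP lx]]] maxL.
case: (boolP [exists u, e u y]) => [/existsP [u euy] | ].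
  have : P L.+1.
    rewrite /P; apply/existsP; exists u; apply/existsP; exists [tuple of y :: p].
    by rewrite (_ : tval [tuple of y :: p] = y :: tval p) //= euy pp lx eqxx.
  by move/maxL; rewrite ltnn.
move/existsPn => src.
have ys : y = s by apply: Hs => u; apply: src.
apply/connectP; exists (tval p); last by rewrite -ys lx.
rewrite -ys; apply: sub_path pp => a c h; by rewrite /eS /= h in_setT.
Qed.

Lemma burn_le (T : finType) (e : rel T) (Hac : acyclic e)
  (Hsrc : exists s : T, is_source e s /\ forall t : T, is_source e t -> t = s) k :
  #|T| * 2 <= k * k.+1 -> burning_number e <= k.
Proof.
move=> Hk; case: Hsrc => s [_ Hs].
have Hc : #|[set: T]| * 2 <= k * k.+1 by rewrite cardsT.
have [t Ht] := claim Hac (fun x _ => reach_all Hac Hs x) Hc.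
rewrite /burning_number; case: ex_minnP => m _ minm; apply: minm.
apply/existsP; exists t; apply/forallP => x; apply/existsP.
by have [i Hi] := Ht x (in_setT x); exists i.
Qed.

Local Open Scope ring_scope.

Theorem mainTheorem5 (R : realType) (T : finType) (e : rel T)
  (Hacyc : acyclic e)
  (Hsrc : exists s : T, is_source e s /\ forall t : T, is_source e t -> t = s) :
  ((burning_number e)%:Z <=
     Num.ceil (Num.sqrt (2 * (#|T|%:R : R) + 1 / 4) - 1 / 2))%R.
Proof.
set n := #|T|.
set a := 2 * (n%:R : R) + 1 / 4.
have a0 : 1 / 4 <= a by rewrite /a lerDr mulr_ge0.
set r := Num.sqrt a.
have r0 : 0 <= r := sqrtr_ge0 a.
have r2 : r ^+ 2 = a by apply: sqr_sqrtr; apply: le_trans a0; lra.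
set y := r - 1 / 2.
have y0 : 0 <= y by rewrite /y; nra.
have c0 : 0 <= Num.ceil y by rewrite ceil_ge0 (lt_le_trans _ y0) // ltrN10.
set c := Num.ceil y in c0 *.
have kge : y <= (`|c|%N)%:R.
  by have := ceil_ge y; rewrite -/c -{1}(gez0_abs c0) pmulrn.
rewrite -(gez0_abs c0) lez_nat; apply: burn_le => //.
set k := `|c|%N in kge *.
rewrite -(ler_nat R) !natrM -addn1 natrD.
rewrite /y /a in kge r2; nra.
Qed.
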